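(* Let $\mathcal{L}\subseteq\mathcal{L}_n$ be a nonzero linear subspace invariant under the conjugation action of $S_n$. Then $\mathcal{L}\cap\mathcal{L}_n^+$ contains a nonzero matrix if and only if $J\in\mathcal{L}$ (equivalently $\operatorname{span}_{\mathbb{R}}(J)\subseteq\mathcal{L}$, where $\operatorname{span}_{\mathbb{R}}(J)$ is the trivial $S_n$-module).
   Context: Let $\mathbf{1}\in\mathbb{R}^n$ be the all-ones column vector, $\mathcal{L}_n=\{Q\in \mathrm{Mat}_n(\mathbb{R}): Q\mathbf{1}=0\}$, and $\mathcal{L}_n^+$ the set of $Q\in\mathcal{L}_n$ with nonnegative off-diagonal entries. $J:=\frac1n\mathbf{1}\mathbf{1}^T-I_n$ (the rate matrix with all off-diagonal entries $\frac1n$). For $\sigma\in S_n$, $K_\sigma$ is the permutation matrix with $e_iK_\sigma=e_{\sigma(i)}$; the conjugation action is $\sigma\cdot X=K_\sigma^TXK_\sigma$, and a subspace is invariant if it is closed under this action for all $\sigma\in S_n$. *)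

(* Defs.v *)
From HB Require Import structures.
From mathcomp Require Import all_boot all_order all_algebra all_fingroup.
From mathcomp Require Import reals.
Set Implicit Arguments. Unset Strict Implicit. Unset Printing Implicit Defensive.
Import Order.TTheory GRing.Theory Num.Theory.
Local Open Scope ring_scope.

Definition ones (R : realType) (n : nat) : 'cV[R]_n := const_mx 1.

Definition inLn (R : realType) (n : nat) (Q : 'M[R]_n) : Prop :=
  Q *m ones R n = 0.

Definition inLnplus (R : realType) (n : nat) (Q : 'M[R]_n) : Prop :=
  inLn Q /\ (forall i j : 'I_n, i != j -> 0 <= Q i j).

Definition Jmat (R : realType) (n : nat) : 'M[R]_n :=
  (n%:R)^-1 *: (ones R n *m (ones R n)^T) - 1%:M.

(* K_sigma: e_i K_sigma = e_{sigma i}, i.e. K_sigma i j = (sigma i == j);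
   this is mathcomp's perm_mx. *)
Definition Kperm (R : realType) (n : nat) (s : 'S_n) : 'M[R]_n := perm_mx s.

Definition pact (R : realType) (n : nat) (s : 'S_n) (X : 'M[R]_n) : 'M[R]_n :=
  (Kperm R s)^T *m X *m Kperm R s.

Definition Sn_invariant (R : realType) (n : nat) (L : {vspace 'M[R]_n}) : Prop :=
  forall (s : 'S_n) (X : 'M[R]_n), X \in L -> pact s X \in L.

(* Main.v *)
Require Import Defs.
From HB Require Import structures.
From mathcomp Require Import all_boot all_order all_algebra all_fingroup.
From mathcomp Require Import reals.
From mathcomp Require Import ring zify.
Import Order.TTheory GRing.Theory Num.Theory.
Local Open Scope ring_scope.

Lemma rowsum (R : realType) (n : nat) (X : 'M[R]_n) : inLn X ->
  forall i, \sum_k X i k = 0.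
Proof.
rewrite /inLn => X1 i.
have H := congr1 (fun M : 'cV[R]_n => M i ord0) X1.
rewrite /= !mxE in H. rewrite -[RHS]H.
by apply: eq_bigr => k _; rewrite /ones mxE mulr1.
Qed.

Lemma JmatE (R : realType) (n : nat) i j :
  Jmat R n i j = n%:R^-1 - (i == j)%:R.
Proof. by rewrite /Jmat !mxE big_ord1 !mxE !mulr1. Qed.

Lemma pactE (R : realType) (n : nat) (s : 'S_n) (X : 'M[R]_n) i j :
  pact s X i j = X (s^-1%g i) (s^-1%g j).
Proof.
rewrite /pact /Kperm tr_perm_mx -row_permE.
have -> : perm_mx s = perm_mx (s^-1)^-1 :> 'M[R]_n by rewrite invgK.
by rewrite -col_permE !mxE.
Qed.

Lemma perm_exists (n : nat) (i j k l : 'I_n) : i != j -> k != l ->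
  exists t : 'S_n, t i = k /\ t j = l.
Proof.
move=> ij kl.
exists (tperm i k * tperm (tperm i k j) l)%g; rewrite !permM tpermL.
split; last by rewrite tpermL.
have hk : tperm i k j != k.
  rewrite -{2}(tpermL i k) (inj_eq perm_inj).
  by apply/eqP=> h; move: ij; rewrite h eqxx.
apply: tpermD => //.
by apply/eqP=> h; move: kl; rewrite h eqxx.
Qed.

Lemma forward (R : realType) (n : nat) (L : {vspace 'M[R]_n}) :
  (forall X : 'M[R]_n, X \in L -> inLn X) ->
  Sn_invariant L ->
  forall Q, Q \in L -> inLnplus Q -> Q != 0 -> Jmat R n \in L.
Proof.
move=> HL Hinv Q QL [Q1 Qpos] Q0.
have [[a b] /= /andP[ab Qab] | H] :=
  pickP [pred p : 'I_n * 'I_n | (p.1 != p.2) && (0 < Q p.1 p.2)]; last first.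
  case/negP: Q0; apply/eqP/matrixP => i j; rewrite mxE.
  have off : forall k, k != i -> Q i k = 0.
    move=> k ki; have := H (i, k); rewrite /= eq_sym ki /= => /negbT.
    by rewrite lt_def negb_and negbK (Qpos _ _ _) ?orbF 1?eq_sym // => /eqP.
  case: (eqVneq j i) => [->|ji]; last exact: off.
  have := @rowsum _ _ _ Q1 i; rewrite (bigD1 i) //= big1 ?addr0 //; exact: off.
pose A := \sum_(s : 'S_n) pact s Q.
have AL : A \in L by apply: memv_suml => s _; exact: Hinv.
have AE : forall i j, A i j = \sum_(s : 'S_n) Q (s^-1%g i) (s^-1%g j).
  by move=> i j; rewrite summxE; apply: eq_bigr => s _; rewrite pactE.
have Ainv : forall (t : 'S_n) i j, A (t i) (t j) = A i j.
  move=> t i j; rewrite !AE (reindex_inj (mulIg t)) /=.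
  by apply: eq_bigr => s _; rewrite invMg !permM !permK.
have Aoff : forall i j, i != j -> A i j = A a b.
  move=> i j ij; have [t [ta tb]] := @perm_exists _ a b i j ab ij.
  by rewrite -ta -tb Ainv.
have Adiag : forall i, A i i = A a a.
  by move=> i; rewrite -(tpermL a i) Ainv.
have Apos : 0 < A a b.
  rewrite AE (bigD1 1%g) //= invg1 !perm1 ltr_pwDl //.
  apply: sumr_ge0 => s _; apply: Qpos.
  by rewrite (inj_eq perm_inj).
have hn := ltn_predK (ltn_ord a).
have S : \sum_(k | k != a) A a k = A a b *+ n.-1.
  rewrite (eq_bigr (fun=> A a b)); last first.
    by move=> k ka; apply: Aoff; rewrite eq_sym.
  by rewrite sumr_const cardC1 card_ord.
have RS := @rowsum _ _ _ (HL A AL) a.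
rewrite (bigD1 a) //= S in RS.
have Aaa : A a a = - (A a b *+ n.-1) by apply/eqP; rewrite -addr_eq0 RS.
have Ab0 : A a b != 0 by rewrite gt_eqF.
have n0 : (n.-1.+1)%:R != 0 :> R by rewrite pnatr_eq0.
have hnR : n%:R = (n.-1.+1)%:R :> R by rewrite hn.
have JA : Jmat R n = (n%:R * A a b)^-1 *: A.
  apply/matrixP => i j; rewrite JmatE mxE.
  case: (eqVneq i j) => [<-|ij]; last first.
    rewrite Aoff // subr0 hnR; field; by rewrite Ab0 /= addrC natr1 n0.
  rewrite (Adiag i) Aaa hnR -mulr_natr mulrS /=.
  field; by rewrite Ab0 /= addrC natr1 n0.
by rewrite JA memvZ.
Qed.

Theorem mainTheorem10 (R : realType) (n : nat) (L : {vspace 'M[R]_n}) :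
  (forall X : 'M[R]_n, X \in L -> inLn X) ->
  L != 0%VS ->
  Sn_invariant L ->
  ((exists Q : 'M[R]_n, [/\ Q \in L, inLnplus Q & Q != 0]) <-> Jmat R n \in L).
Proof.
move=> HL L0 Hinv; split.
  by move=> [Q [QL QP Q0]]; exact: (@forward R n L HL Hinv Q).
move=> JL.
have X0 : vpick L != 0 by rewrite vpick0.
have XL := memv_pick L.
have n2 : (1 < n)%N.
  rewrite ltnNge; apply/negP => n1; case/negP: X0; apply/eqP/matrixP => i j.
  rewrite mxE.
  have all_eq : forall k l : 'I_n, k = l.
    by move=> k l; apply: val_inj; move: (ltn_ord k) (ltn_ord l) n1 => /= ? ? ?; lia.
  rewrite (all_eq j i); have := @rowsum _ _ _ (HL _ XL) i.
  rewrite (bigD1 i) //= big_pred0 ?addr0 // => k.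
  by rewrite (all_eq k i) eqxx.
exists (Jmat R n); split => //.
  split; first exact: HL.
  by move=> i j ij; rewrite JmatE (negbTE ij) subr0 invr_ge0 ler0n.
apply/negP => /eqP J0.
have := congr1 (fun M : 'M[R]_n => M (Ordinal (ltnW n2)) (Ordinal n2)) J0.
rewrite /= JmatE mxE /= subr0 => /eqP.
by rewrite invr_eq0 pnatr_eq0; case: n n2 {L HL L0 Hinv JL X0 XL J0}.
Qed.
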